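(* Let $\mathcal{X} \subseteq \mathbb{R}^m$ be countable with ground metric $d$, and let $\widehat\nu = \sum_{j=1}^N \widehat\nu_j \delta_{\widehat x_j}$ be a probability mass function supported on $N$ distinct points $\widehat x_1,\dots,\widehat x_N \in \mathcal{X}$ with $\widehat\nu_j > 0$ and $\sum_j \widehat\nu_j = 1$. For $\varepsilon \ge 0$ let $\mathbb{B}_{\mathbb{W}}(\widehat\nu,\varepsilon) = \{\nu \in \mathcal{M}(\mathcal{X}) : \mathbb{W}(\nu,\widehat\nu) \le \varepsilon\}$. Then for any $\varepsilon \ge 0$ and $x \in \mathcal{X}$, $$\sup_{\nu \in \mathbb{B}_{\mathbb{W}}(\widehat\nu,\varepsilon)} \nu(x) = \max\Big\{ \sum_{j=1}^N T_j : T \in \mathbb{R}^N_+,\ \sum_{j=1}^N d(x,\widehat x_j)\, T_j \le \varepsilon,\ T_j \le \widehat\nu_j \ \forall j \in [N] \Big\}.$$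
   Context: $\mathcal{M}(\mathcal{X})$ is the set of probability mass functions supported on $\mathcal{X}$; $[N] = \{1,\dots,N\}$. The type-1 Wasserstein distance is $\mathbb{W}(\nu_1,\nu_2) = \inf_{\lambda \in \Lambda(\nu_1,\nu_2)} \mathbb{E}_\lambda[d(x_1,x_2)]$, where $\Lambda(\nu_1,\nu_2)$ is the set of couplings on $\mathcal{X}\times\mathcal{X}$ with marginals $\nu_1,\nu_2$. *)

(* Defs.v *)
From HB Require Import structures.
From mathcomp Require Import all_boot all_order all_algebra.
From mathcomp Require Import all_classical all_reals all_analysis.
Set Implicit Arguments. Unset Strict Implicit. Unset Printing Implicit Defensive.
Import Order.TTheory GRing.Theory Num.Theory.
Local Open Scope classical_set_scope.
Local Open Scope ring_scope.

Definition is_metric_on (R : realType) (T : choiceType) (X : set T) (d : T -> T -> R) :=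
  (forall x y, X x -> X y -> 0 <= d x y) /\
  (forall x y, X x -> X y -> (d x y = 0 <-> x = y)) /\
  (forall x y, X x -> X y -> d x y = d y x) /\
  (forall x y z, X x -> X y -> X z -> d x z <= d x y + d y z).

Definition is_pmf (R : realType) (T : choiceType) (X : set T) (nu : T -> R) :=
  (forall y, 0 <= nu y) /\ (forall y, ~ X y -> nu y = 0) /\
  (\esum_(y in X) (nu y)%:E = 1%E).

Definition is_coupling (R : realType) (T : choiceType) (X : set T)
    (nu1 nu2 : T -> R) (lam : T * T -> R) :=
  (forall p, 0 <= lam p) /\ (forall p, ~ (X `*` X) p -> lam p = 0) /\
  (forall x, X x -> \esum_(y in X) (lam (x, y))%:E = (nu1 x)%:E) /\
  (forall y, X y -> \esum_(x in X) (lam (x, y))%:E = (nu2 y)%:E).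

Definition wasserstein (R : realType) (T : choiceType) (X : set T) (d : T -> T -> R)
    (nu1 nu2 : T -> R) : \bar R :=
  ereal_inf [set \esum_(p in X `*` X) (d p.1 p.2 * lam p)%:E
            | lam in [set lam | is_coupling X nu1 nu2 lam]].

Definition discrete_pmf (R : realType) (T : choiceType) (N : nat)
    (xhat : 'I_N -> T) (nuhat : 'I_N -> R) : T -> R :=
  fun y => \sum_(j < N | xhat j == y) nuhat j.

Definition wball (R : realType) (T : choiceType) (X : set T) (d : T -> T -> R)
    (nuh : T -> R) (eps : R) : set (T -> R) :=
  [set nu | is_pmf X nu /\ (wasserstein X d nu nuh <= eps%:E)%E].

Definition lp_feasible (R : realType) (T : choiceType) (N : nat) (d : T -> T -> R)
    (x : T) (xhat : 'I_N -> T) (nuhat : 'I_N -> R) (eps : R) (t : 'I_N -> R) :=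
  (forall j, 0 <= t j) /\ (\sum_(j < N) d x (xhat j) * t j <= eps) /\
  (forall j, t j <= nuhat j).

(* Main.v *)
Require Import Defs.
From HB Require Import structures.
From mathcomp Require Import all_boot all_order all_algebra.
From mathcomp Require Import all_classical all_reals all_analysis.
From mathcomp Require Import ring lra.
Import Order.TTheory GRing.Theory Num.Theory.
Local Open Scope classical_set_scope.
Local Open Scope ring_scope.
Section Esum.
Variables (R : realType) (T : choiceType).

Lemma esum_pt (S : set T) (a : T) (c : R) : S a -> 0 <= c ->
  \esum_(y in S) (c * (y == a)%:R)%:E = c%:E.
Proof.
move=> Sa c0.
rewrite (esumID [set a]); last by move=> y _; rewrite lee_fin mulr_ge0.
have -> : S `&` [set a] = [set a] by apply/seteqP; split=> y /= => [[]//|->].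
rewrite esum_set1 ?lee_fin ?eqxx ?mulr1 // ?mulr_ge0 // esum1 ?adde0 //.
by move=> y [_ /= /eqP/negPf ->]; rewrite mulr0.
Qed.

Lemma esum_pts (S : set T) (I : finType) (a : I -> T) (c : I -> R) :
  (forall i, S (a i)) -> (forall i, 0 <= c i) ->
  \esum_(y in S) (\sum_(i : I) c i * (y == a i)%:R)%:E = (\sum_(i : I) c i)%:E.
Proof.
move=> Sa c0.
under eq_esum do rewrite -sumEFin.
rewrite esum_sum; last by move=> y i _ _; rewrite lee_fin mulr_ge0.
rewrite -sumEFin; apply: eq_bigr => i _; exact: esum_pt.
Qed.

Lemma esum_pts2 (S : set T) (I : finType) (a a' : I -> T) (c c' : I -> R) :
  (forall i, S (a i)) -> (forall i, S (a' i)) ->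
  (forall i, 0 <= c i) -> (forall i, 0 <= c' i) ->
  \esum_(y in S) (\sum_(i : I) (c i * (y == a i)%:R + c' i * (y == a' i)%:R))%:E
   = (\sum_(i : I) (c i + c' i))%:E.
Proof.
move=> Sa Sa' c0 c'0.
under eq_esum do rewrite big_split EFinD.
rewrite esumD; last 2 first.
- by move=> y _; rewrite lee_fin sumr_ge0 // => i _; rewrite mulr_ge0.
- by move=> y _; rewrite lee_fin sumr_ge0 // => i _; rewrite mulr_ge0.
by rewrite !esum_pts // big_split EFinD.
Qed.

Lemma esum_single (S : set T) (f : T -> R) (a : T) : S a ->
  (forall y, S y -> 0 <= f y) -> ((f a)%:E <= \esum_(y in S) (f y)%:E)%E.
Proof.
move=> Sa f0; rewrite -(@esum_pt S a (f a) Sa (f0 _ Sa)); apply: le_esum => y Sy.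
rewrite lee_fin; have [->|_] := eqVneq y a; first by rewrite mulr1.
by rewrite mulr0 f0.
Qed.
End Esum.
Section LP.
Variables (R : realType) (N : nat) (D nu : 'I_N -> R).
Hypothesis D0 : forall j, 0 <= D j.
Hypothesis nu0 : forall j, 0 < nu j.

Definition feas (eps : R) (t : 'I_N -> R) :=
  (forall j, 0 <= t j) /\ (\sum_(j < N) D j * t j <= eps) /\ (forall j, t j <= nu j).

Lemma sum_term_le (F : 'I_N -> R) k : (forall j, 0 <= F j) -> F k <= \sum_j F j.
Proof.
move=> F0; rewrite (bigD1 k) //= lerDl sumr_ge0 //.
Qed.

Lemma lp_case_a eps : \sum_j D j * nu j <= eps ->
  feas eps nu /\ forall t, feas eps t -> \sum_j t j <= \sum_j nu j.
Proof.
move=> H; split; first by split; [move=> j; exact: ltW|split].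
by move=> t [_ [_ tn]]; apply: ler_sum => j _.
Qed.

Lemma lp_case_b : exists ts, feas 0 ts /\ forall t, feas 0 t -> \sum_j t j <= \sum_j ts j.
Proof.
exists (fun j => if D j == 0 then nu j else 0); split.
  split; first by move=> j; case: ifP => // _; exact: ltW.
  split; last by move=> j; case: ifP => // _; exact: ltW.
  rewrite big1 // => j _; case: ifP => [/eqP->|]; by rewrite ?mul0r ?mulr0.
move=> t [t0 [tD tn]].
have z : forall j, D j * t j = 0.
  move=> j; apply: (@psumr_eq0P _ _ xpredT (fun j => D j * t j)) => // [i _|].
    exact: mulr_ge0.
  by apply: le_anti; rewrite tD sumr_ge0 // => i _; exact: mulr_ge0.
apply: ler_sum => j _; case: ifP => // /negbT Dj.
by have /eqP := z j; rewrite mulf_eq0 (negPf Dj) /= => /eqP->.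
Qed.

Lemma lp_case_c eps : 0 < eps -> eps < \sum_j D j * nu j ->
  exists ts, feas eps ts /\ forall t, feas eps t -> \sum_j t j <= \sum_j ts j.
Proof.
move=> e0 etot.
have [j0 _] : exists j : 'I_N, true.
  case: (pickP (fun _ : 'I_N => true)) => [j _|H]; first by exists j.
  by move: etot; rewrite big_pred0 // => /(lt_trans e0); rewrite ltxx.
pose jm := [arg min_(j < j0) D j]%O.
have jmP : forall j, D jm <= D j by rewrite /jm; case: arg_minP => // i _ H j; apply: H.
pose F c := \sum_(j | D j < c) D j * nu j.
pose P := [pred k | F (D k) <= eps].
have Pjm : P jm.
  rewrite inE /F big_pred0; first exact: ltW.
  by move=> j; apply/negbTE; rewrite -leNgt jmP.
pose k := [arg max_(k > jm | P k) D k]%O.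
have [Pk kmax] : P k /\ forall j, P j -> D j <= D k.
  by rewrite /k; case: arg_maxP => // i Pi H; split => // j Pj; apply: H.
set c := D k.
have Gc : eps <= \sum_(j | D j <= c) D j * nu j.
  rewrite leNgt; apply/negP => Hlt.
  case: (pickP [pred j | c < D j]) => [j1 Hj1|Hnone].
    pose k' := [arg min_(j < j1 | c < D j) D j]%O.
    have [Qk' k'min] : c < D k' /\ forall j, c < D j -> D k' <= D j.
      by rewrite /k'; case: arg_minP => // i Pi H; split => // j Pj; apply: H.
    have : P k'.
      rewrite inE /F (eq_bigl (fun j => D j <= c)); first exact: ltW.
      move=> j /=; case: (leP (D j) c) => h; first exact: (le_lt_trans h).
      by apply/negbTE; rewrite -leNgt k'min.
    by move=> /kmax; rewrite leNgt Qk'.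
  move: Hlt; rewrite (eq_bigl xpredT) => [Hlt|j /=].
    by move: (lt_trans etot Hlt); rewrite ltxx.
  by have := Hnone j; rewrite /= leNgt => ->.
have c0 : 0 < c.
  rewrite lt_def D0 andbT; apply/eqP => c0.
  move: Gc; rewrite big1 => [Gc|j]; first by move: (lt_le_trans e0 Gc); rewrite ltxx.
  rewrite c0 => h; have -> : D j = 0 by apply: le_anti; rewrite h D0.
  by rewrite mul0r.
pose H := \sum_(j | D j == c) nu j.
have H0 : 0 < H.
  rewrite /H (bigD1 k) ?eqxx //=.
  have := nu0 k; have : 0 <= \sum_(i | (D i == c) && (i != k)) nu i.
    by apply: sumr_ge0 => i _; exact: ltW.
  lra.
have GFH : \sum_(j | D j <= c) D j * nu j = F c + c * H.
  rewrite /F /H mulr_sumr big_mkcond [X in _ = X + _]big_mkcond.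
  rewrite [X in _ = _ + X]big_mkcond -big_split; apply: eq_bigr => j _ /=.
  by case: (ltgtP (D j) c) => h //=; rewrite ?addr0 ?add0r ?h.
pose th := (eps - F c) / (c * H).
have cH0 : 0 < c * H by exact: mulr_gt0.
have th0 : 0 <= th by rewrite /th divr_ge0 // ?subr_ge0 //; exact: ltW.
have th1 : th <= 1 by rewrite /th ler_pdivrMr // mul1r; lra.
have thE : th * (c * H) = eps - F c by rewrite /th divfK // gt_eqF.
pose ts j := if D j < c then nu j else if D j == c then th * nu j else 0.
have sumDts : \sum_j D j * ts j = eps.
  have -> : \sum_j D j * ts j = \sum_j ((if D j < c then D j * nu j else 0)
        + (if D j == c then th * (c * nu j) else 0)).
    apply: eq_bigr => j _; rewrite /ts; case: ltgtP => h //=;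
      rewrite ?addr0 ?add0r ?mulr0 // h; lra.
  rewrite big_split /= -!big_mkcond /= -mulr_sumr -mulr_sumr -/(F c) -/H thE.
  lra.
exists ts; split.
  split; first by move=> j; rewrite /ts; case: ifP => _; [exact: ltW|case: ifP => _ //];
    apply: mulr_ge0 => //; exact: ltW.
  split; first by rewrite sumDts.
  move=> j; rewrite /ts; case: ifP => _ //; case: ifP => _; last exact: ltW.
  have := nu0 j; nra.
move=> t [t0 [tD tn]].
have ci0 : 0 <= c^-1 by rewrite invr_ge0 ltW.
have key : \sum_j t j <= \sum_j (t j - c^-1 * (D j * t j)) + c^-1 * eps.
  rewrite sumrB -mulr_sumr.
  have : c^-1 * (\sum_j D j * t j) <= c^-1 * eps by apply: ler_wpM2l.
  lra.
have key2 : \sum_j ts j = \sum_j (ts j - c^-1 * (D j * ts j)) + c^-1 * eps.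
  rewrite sumrB -mulr_sumr sumDts; lra.
apply: (le_trans key); rewrite key2 lerD2r; apply: ler_sum => j _.
have cc : c^-1 * c = 1 by rewrite mulVf // gt_eqF.
rewrite /ts; case: ltgtP => h.
- have q : 0 <= 1 - c^-1 * D j.
    rewrite subr_ge0 -(ler_pM2l c0) mulrA mulfV ?gt_eqF // mul1r mulr1; exact: ltW.
  have q2 : 0 <= nu j - t j by rewrite subr_ge0.
  have := mulr_ge0 q q2; rewrite !mulrA; nra.
- have q : 1 - c^-1 * D j <= 0.
    rewrite subr_le0 -(ler_pM2l c0) mulrA mulfV ?gt_eqF // mul1r mulr1; exact: ltW.
  have := mulr_le0_ge0 q (t0 j); rewrite !mulrA ?mulr0 ?subr0; nra.
- by rewrite h !mulrA cc !mul1r !subrr.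
Qed.

Lemma lp_exists eps : 0 <= eps ->
  exists ts, feas eps ts /\ forall t, feas eps t -> \sum_j t j <= \sum_j ts j.
Proof.
move=> e0; case: (leP (\sum_j D j * nu j) eps) => h.
  by exists nu; apply: lp_case_a.
move: e0; rewrite le_eqVlt => /orP[/eqP<-|e0]; first exact: lp_case_b.
exact: lp_case_c.
Qed.

Definition Kc := \sum_j (if D j == 0 then 0 else (D j)^-1).

Lemma lp_cont eps (ts : 'I_N -> R) dl : 0 <= eps -> 0 < dl ->
  (forall t, feas eps t -> \sum_(j < N) t j <= \sum_j ts j) ->
  forall t, feas (eps + dl) t -> \sum_j t j <= \sum_j ts j + dl * Kc.
Proof.
move=> e0 d0 opt t [t0 [tD tn]].
have ed0 : 0 < eps + dl by lra.
pose s := eps / (eps + dl).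
have s0 : 0 <= s by rewrite /s divr_ge0 // ltW.
have s1 : s <= 1 by rewrite /s ler_pdivrMr // mul1r; lra.
pose t' j := if D j == 0 then t j else s * t j.
have ft' : feas eps t'.
  split; first by move=> j; rewrite /t'; case: ifP => _ //; exact: mulr_ge0.
  split; last first.
    move=> j; rewrite /t'; case: ifP => _ //; apply: le_trans (tn j).
    by have := t0 j; nra.
  have -> : \sum_j D j * t' j = s * \sum_j D j * t j.
    rewrite mulr_sumr; apply: eq_bigr => j _; rewrite /t'.
    by case: eqP => [->|_]; rewrite ?mul0r ?mulr0 // mulrCA.
  have -> : eps = s * (eps + dl) by rewrite /s divfK // gt_eqF.
  exact: ler_wpM2l.
have := opt _ ft'.
suff : \sum_j t j <= \sum_j t' j + dl * Kc by lra.
rewrite /Kc mulr_sumr -big_split; apply: ler_sum => j _ /=; rewrite /t'.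
have [Dj|Dj] := eqVneq (D j) 0; first by rewrite mulr0 addr0.
have Dp : 0 < D j by rewrite lt_def Dj /=; exact: D0.
have Dt : D j * t j <= eps + dl.
  apply: le_trans tD; apply: (@sum_term_le (fun j => D j * t j)) => i.
  exact: mulr_ge0.
have tb : t j <= (eps + dl) / D j by rewrite ler_pdivlMr // mulrC.
have e1 : 1 - s = dl / (eps + dl).
  by rewrite /s; field; rewrite gt_eqF.
have : t j * (1 - s) <= dl * (D j)^-1.
  rewrite e1; apply: (le_trans (ler_wpM2r _ tb)).
    by rewrite divr_ge0 // ltW.
  by rewrite le_eqVlt; apply/orP; left; apply/eqP; field; rewrite !gt_eqF.
by rewrite mulrBr mulr1 (mulrC (t j)); lra.
Qed.
End LP.

Theorem mainTheorem5 (R : realType) (m : nat) (X : set 'rV[R]_m)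
  (d : 'rV[R]_m -> 'rV[R]_m -> R) (N : nat)
  (xhat : 'I_N -> 'rV[R]_m) (nuhat : 'I_N -> R) :
  countable X -> is_metric_on X d ->
  injective xhat -> (forall j, X (xhat j)) ->
  (forall j, 0 < nuhat j) -> \sum_(j < N) nuhat j = 1 ->
  forall (eps : R) (x : 'rV[R]_m), 0 <= eps -> X x ->
  exists tstar : 'I_N -> R,
    lp_feasible d x xhat nuhat eps tstar /\
    (forall t, lp_feasible d x xhat nuhat eps t ->
       \sum_(j < N) t j <= \sum_(j < N) tstar j) /\
    ereal_sup [set (nu x)%:E | nu in wball X d (discrete_pmf xhat nuhat) eps]
      = (\sum_(j < N) tstar j)%:E.
Proof.
move=> cX [dge0 [dzero [dsym dtri]]] inj Xh nu0 sum1 eps x e0 Xx.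
pose D j := d x (xhat j).
have D0 : forall j, 0 <= D j by move=> j; apply: dge0.
have [ts [fts opt]] := @lp_exists R N D nuhat D0 nu0 eps e0.
exists ts; split; first exact: fts.
split; first exact: opt.
set V := \sum_j ts j.
pose nuh := discrete_pmf xhat nuhat.
have nuhE : forall j, nuh (xhat j) = nuhat j.
  by move=> j; rewrite /nuh /discrete_pmf (big_pred1 j) // => i; rewrite /= (inj_eq inj).
have nuh0 : forall z, (forall j, xhat j != z) -> nuh z = 0.
  by move=> z H; rewrite /nuh /discrete_pmf big_pred0 // => i; apply/negbTE.
have [ts0 [tsD tsn]] := fts.
apply: le_anti; apply/andP; split.
- apply: ge_ereal_sup => _ [nu [pmf W] <-]; rewrite lee_fin.
  apply/ler_addgt0Pr => e ep.
  pose K := @Kc R N D.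
  have K0 : 0 <= K.
    by apply: sumr_ge0 => j _; case: ifP => // _; rewrite invr_ge0.
  pose dl := e / (K + 1).
  have dlp : 0 < dl by rewrite /dl divr_gt0 //; lra.
  have dlK : dl * K <= e.
    rewrite /dl mulrAC ler_pdivrMr; last by lra.
    by rewrite ler_pM2l //; lra.
  suff main : nu x <= V + dl * K by lra.
  have : (wasserstein X d nu nuh < (eps + dl)%:E)%E.
    by apply: (le_lt_trans W); rewrite lte_fin; lra.
  case/ereal_inf_lt => _ [lam [lam0 [lamX [m1 m2]]] <-] hlt.
  pose T j := lam (x, xhat j).
  have fT : feas R N D nuhat (eps + dl) T.
    split; first by move=> j; apply: lam0.
    split; last first.
      move=> j; have := @esum_single _ _ X (fun y => lam (y, xhat j)) x Xx (fun y _ => lam0 _).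
      by rewrite m2 // nuhE lee_fin.
    have : ((\sum_j D j * T j)%:E <= \esum_(p in X `*` X) (d p.1 p.2 * lam p)%:E)%E.
      rewrite -(@esum_pts _ _ (X `*` X) _ (fun j => (x, xhat j)) (fun j => D j * T j)); last 2 first.
      - by move=> j; split; (exact: Xx || exact: Xh).
      - by move=> j; apply: mulr_ge0 => //; apply: lam0.
      apply: le_esum => p [Xp1 Xp2]; rewrite lee_fin.
      case: (pickP (fun k => p == (x, xhat k))) => [k /eqP pk | none].
        subst p; rewrite (bigD1 k) //= eqxx mulr1 big1 ?addr0 // => i ik.
        by rewrite xpair_eqE eqxx /= (inj_eq inj) eq_sym (negPf ik) mulr0.
      rewrite big1; last by move=> i _; rewrite none mulr0.
      by apply: mulr_ge0; [apply: dge0|apply: lam0].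
    move=> h1; have := le_lt_trans h1 hlt; rewrite lte_fin => h2; exact: ltW.
  have nuxT : nu x <= \sum_j T j.
    rewrite -lee_fin -m1 // -(@esum_pts _ _ X _ xhat T) //; last by move=> j; apply: lam0.
    apply: le_esum => z Xz; rewrite lee_fin.
    case: (pickP (fun k => z == xhat k)) => [k /eqP pk | none].
      subst z; rewrite (bigD1 k) //= eqxx mulr1 big1 ?addr0 // => i ik.
      by rewrite (inj_eq inj) eq_sym (negPf ik) mulr0.
    rewrite big1; last by move=> i _; rewrite none mulr0.
    have := @esum_single _ _ X (fun y => lam (y, z)) x Xx (fun y _ => lam0 _).
    rewrite m2 // nuh0 ?lee_fin // => j; rewrite eq_sym; apply/negbT; exact: none.
  apply: (le_trans nuxT); exact: (@lp_cont R N D nuhat D0 eps ts dl e0 dlp opt T fT).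
- pose nus y := \sum_j (ts j * (y == x)%:R + (nuhat j - ts j) * (y == xhat j)%:R).
  pose lam (p : 'rV[R]_m * 'rV[R]_m) := \sum_j (ts j * (p == (x, xhat j))%:R
     + (nuhat j - ts j) * (p == (xhat j, xhat j))%:R).
  have tsn' : forall j, 0 <= nuhat j - ts j by move=> j; rewrite subr_ge0.
  have pmf : is_pmf X nus.
    split.
      by move=> y; apply: sumr_ge0 => j _; apply: addr_ge0; apply: mulr_ge0.
    split.
      move=> y Xy; apply: big1 => j _.
      have -> : (y == x) = false by apply/negbTE; apply/eqP => e; apply: Xy; rewrite e.
      have -> : (y == xhat j) = false by apply/negbTE; apply/eqP => e; apply: Xy; rewrite e.
      by rewrite !mulr0 addr0.
    rewrite /nus (@esum_pts2 _ _ X _ (fun _ => x) xhat ts (fun j => nuhat j - ts j)) //.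
    by rewrite -sum1; congr EFin; apply: eq_bigr => j _; rewrite addrC subrK.
  have coup : is_coupling X nus nuh lam.
    split; first by move=> p; apply: sumr_ge0 => j _; apply: addr_ge0; apply: mulr_ge0.
    split.
      move=> p Xp; apply: big1 => j _.
      have -> : (p == (x, xhat j)) = false.
        by apply/negbTE; apply/eqP => e; apply: Xp; rewrite e; split; (exact: Xx || exact: Xh).
      have -> : (p == (xhat j, xhat j)) = false.
        by apply/negbTE; apply/eqP => e; apply: Xp; rewrite e; split; (exact: Xx || exact: Xh).
      by rewrite !mulr0 addr0.
    split.
      move=> y Xy.
      have -> : \esum_(z in X) (lam (y, z))%:E = \esum_(z in X)
          (\sum_j ((ts j * (y == x)%:R) * (z == xhat j)%:R
                 + ((nuhat j - ts j) * (y == xhat j)%:R) * (z == xhat j)%:R))%:E.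
        apply: eq_esum => z _; congr EFin; apply: eq_bigr => j _.
        rewrite !xpair_eqE; case: (y == x); case: (z == xhat j); case: (y == xhat j);
          by rewrite /= ?mulr1 ?mulr0.
      rewrite esum_pts2 //; move=> j; apply: mulr_ge0 => //.
    move=> z Xz.
    have -> : \esum_(y in X) (lam (y, z))%:E = \esum_(y in X)
        (\sum_j ((ts j * (z == xhat j)%:R) * (y == x)%:R
               + ((nuhat j - ts j) * (z == xhat j)%:R) * (y == xhat j)%:R))%:E.
      apply: eq_esum => y _; congr EFin; apply: eq_bigr => j _.
      rewrite !xpair_eqE; case: (y == x); case: (z == xhat j); case: (y == xhat j);
        by rewrite /= ?mulr1 ?mulr0.
    rewrite (@esum_pts2 _ _ X _ (fun _ => x) xhat) //; last 2 first.
    - by move=> j; apply: mulr_ge0.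
    - by move=> j; apply: mulr_ge0.
    rewrite /nuh /discrete_pmf [in RHS]big_mkcond; congr EFin; apply: eq_bigr => j _.
    rewrite eq_sym; case: (xhat j == z); by rewrite /= ?mulr1 ?mulr0 ?addr0 // addrC subrK.
  have cost : (\esum_(p in X `*` X) (d p.1 p.2 * lam p)%:E <= eps%:E)%E.
    have -> : \esum_(p in X `*` X) (d p.1 p.2 * lam p)%:E = \esum_(p in X `*` X)
        (\sum_j ((D j * ts j) * (p == (x, xhat j))%:R + 0 * (p == (xhat j, xhat j))%:R))%:E.
      apply: eq_esum => p _; congr EFin; rewrite /lam mulr_sumr; apply: eq_bigr => j _.
      have hA : d p.1 p.2 * (p == (x, xhat j))%:R = D j * (p == (x, xhat j))%:R.
        by case: (eqVneq p (x, xhat j)) => [->|_]; rewrite ?mulr0.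
      have hB : d p.1 p.2 * (p == (xhat j, xhat j))%:R = 0.
        case: (eqVneq p (xhat j, xhat j)) => [->|_]; rewrite ?mulr0 //=.
        by rewrite (proj2 (dzero _ _ (Xh j) (Xh j))) // mul0r.
      by rewrite mulrDr (mulrCA _ (ts j)) hA (mulrCA _ (nuhat j - ts j)) hB mulr0 mul0r !addr0 mulrCA mulrA.
    rewrite (@esum_pts2 _ _ (X `*` X) _ (fun j => (x, xhat j)) (fun j => (xhat j, xhat j))) //.
    - by rewrite lee_fin; under eq_bigr do rewrite addr0.
    - by move=> j; split; (exact: Xx || exact: Xh).
    - by move=> j; split; (exact: Xx || exact: Xh).
    - by move=> j; apply: mulr_ge0.
  have Wle : (wasserstein X d nus nuh <= eps%:E)%E.
    apply: le_trans cost; apply: ereal_inf_lbound; by exists lam.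
  have nusx : V <= nus x.
    rewrite /nus big_split /=; under eq_bigr do rewrite eqxx mulr1.
    rewrite lerDl; apply: sumr_ge0 => j _; exact: mulr_ge0.
  apply: (le_trans (_ : _ <= (nus x)%:E)%E); first by rewrite lee_fin.
  by apply: ereal_sup_ubound; exists nus.
Qed.
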